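(* Let $0<\lambda<1$, $0<\beta<1$, and put $D=-3\lambda^2+4\beta^2+4\lambda-4\beta$. (1) If $(\lambda,\beta)\in P$, then the set of nonzero idempotents of $\mathcal{B}'(\lambda,\beta)$ is $\{o,\ a,\ b,\ o+(1-2\lambda)a,\ o+(1-2\lambda)b\}$. (2) If $(\lambda,\beta)\notin P$ (equivalently $D\neq 0$), then the set of nonzero idempotents of $\mathcal{B}'(\lambda,\beta)$ is $\{o,\ a,\ b,\ o+(1-2\lambda)a,\ o+(1-2\lambda)b,\ j_0,\ j_1\}\setminus\{0\}$, where for $\varepsilon\in\{0,1\}$ $$j_\varepsilon=\varepsilon\, o+\frac{\lambda(1-2\varepsilon\lambda)}{D}(2\beta-\lambda)\,a+\frac{\lambda(1-2\varepsilon\lambda)}{D}(2-2\beta-\lambda)\,b+2\Big(\frac{\lambda(1-2\varepsilon\lambda)}{D}\Big)^2(2\beta-\lambda)(2-2\beta-\lambda)\,c.$$ (Elements in these lists may coincide for special parameter values.)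
   Context: For real parameters $0<\lambda<1$ and $0<\beta<1$, $\mathcal{B}'(\lambda,\beta)$ denotes the commutative (non-associative) $4$-dimensional real algebra with basis $\{o,a,b,c\}$ whose bilinear commutative multiplication $\circ$ is determined by $o\circ o=o$, $o\circ a=\lambda a$, $o\circ b=\lambda b$, $a\circ a=a$, $b\circ b=b$, $a\circ b=\frac{\lambda-\beta}{\lambda}a+\frac{\lambda+\beta-1}{\lambda}b+c$, and $c\circ x=x\circ c=0$ for every $x$. (In the paper the basis vector $c$ is written $ab$.) An element $x$ is idempotent if $x\circ x=x$. The set $P$ is $P=\{(\lambda,\beta)\mid 0<\lambda\le \tfrac13,\ \beta=\tfrac12\big(1\pm\sqrt{(1-\lambda)(1-3\lambda)}\big)\}$; for $0<\lambda<1$, $0<\beta<1$ one has $(\lambda,\beta)\in P$ iff $-3\lambda^2+4\beta^2+4\lambda-4\beta=0$. *)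

(* Defs.v *)
From Stdlib Require Import Reals Lra.
Open Scope R_scope.

(* Elements of B'(lambda,beta): coordinates w.r.t. the basis {o,a,b,c} (c = "ab"). *)
Record vec := mkV { co : R; ca : R; cb : R; cc : R }.

Definition vzero : vec := mkV 0 0 0 0.
Definition vadd (x y : vec) : vec :=
  mkV (co x + co y) (ca x + ca y) (cb x + cb y) (cc x + cc y).
Definition vscale (r : R) (x : vec) : vec :=
  mkV (r * co x) (r * ca x) (r * cb x) (r * cc x).

Definition e_o : vec := mkV 1 0 0 0.
Definition e_a : vec := mkV 0 1 0 0.
Definition e_b : vec := mkV 0 0 1 0.
Definition e_c : vec := mkV 0 0 0 1.

Inductive basis := Bo | Ba | Bb | Bc.

Definition coord (x : vec) (i : basis) : R :=
  match i with Bo => co x | Ba => ca x | Bb => cb x | Bc => cc x end.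

Definition mulB (lam bet : R) (i j : basis) : vec :=
  match i, j with
  | Bo, Bo => e_o
  | Bo, Ba | Ba, Bo => vscale lam e_a
  | Bo, Bb | Bb, Bo => vscale lam e_b
  | Ba, Ba => e_a
  | Bb, Bb => e_b
  | Ba, Bb | Bb, Ba =>
      vadd (vscale ((lam - bet) / lam) e_a)
           (vadd (vscale ((lam + bet - 1) / lam) e_b) e_c)
  | Bc, _ | _, Bc => vzero
  end.

Definition all_basis : list basis := Bo :: Ba :: Bb :: Bc :: nil.

Definition bmul (lam bet : R) (x y : vec) : vec :=
  List.fold_right (fun i acc =>
    List.fold_right (fun j acc' =>
      vadd (vscale (coord x i * coord y j) (mulB lam bet i j)) acc') acc all_basis)
    vzero all_basis.

Definition idempotent (lam bet : R) (x : vec) : Prop := bmul lam bet x x = x.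

Definition inP (lam bet : R) : Prop :=
  0 < lam <= 1/3 /\
  (bet = (1 + sqrt ((1 - lam) * (1 - 3 * lam))) / 2 \/
   bet = (1 - sqrt ((1 - lam) * (1 - 3 * lam))) / 2).

Definition Dval (lam bet : R) : R := -3 * lam^2 + 4 * bet^2 + 4 * lam - 4 * bet.

Definition jvec (lam bet eps : R) : vec :=
  let t := lam * (1 - 2 * eps * lam) / Dval lam bet in
  vadd (vscale eps e_o)
   (vadd (vscale (t * (2 * bet - lam)) e_a)
    (vadd (vscale (t * (2 - 2 * bet - lam)) e_b)
          (vscale (2 * t^2 * (2 * bet - lam) * (2 - 2 * bet - lam)) e_c))).

(* Main.v *)
Require Import Defs.
From Stdlib Require Import Reals Lra Psatz.
Open Scope R_scope.

Lemma bsq (lam bet p q r s : R) : lam <> 0 ->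
  bmul lam bet (mkV p q r s) (mkV p q r s) =
  mkV (p*p) (2*lam*p*q + q*q + 2*q*r*(lam-bet)/lam)
      (2*lam*p*r + r*r + 2*q*r*(lam+bet-1)/lam) (2*q*r).
Proof.
  intro H. unfold bmul, mulB, vadd, vscale, e_o, e_a, e_b, e_c, vzero, coord, all_basis.
  simpl. f_equal; field; auto.
Qed.

Lemma idem_iff (lam bet p q r s : R) : lam <> 0 ->
  idempotent lam bet (mkV p q r s) <->
  (p*p = p /\ 2*lam*p*q + q*q + 2*q*r*(lam-bet)/lam = q /\
   2*lam*p*r + r*r + 2*q*r*(lam+bet-1)/lam = r /\ 2*q*r = s).
Proof.
  intro H. unfold idempotent. rewrite bsq by auto. split.
  - intro E. injection E. intros; repeat split; auto.
  - intros [E1 [E2 [E3 E4]]]. rewrite E1, E2, E3, E4. reflexivity.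
Qed.

Lemma classify lam bet p q r s : 0 < lam < 1 -> idempotent lam bet (mkV p q r s) ->
  (p = 0 \/ p = 1) /\ s = 2*q*r /\
  ((q = 0 /\ (r = 0 \/ r = 1 - 2*lam*p)) \/ (r = 0 /\ (q = 0 \/ q = 1 - 2*lam*p)) \/
   (q <> 0 /\ r <> 0 /\ Dval lam bet * q = lam*(1-2*lam*p)*(2*bet-lam) /\
    Dval lam bet * r = lam*(1-2*lam*p)*(2-2*bet-lam))).
Proof.
  intros Hl Hi. assert (Hl0 : lam <> 0) by lra.
  apply idem_iff in Hi; auto. destruct Hi as [E1 [E2 [E3 E4]]].
  assert (E2' : lam*q = 2*lam^2*p*q + lam*q^2 + 2*q*r*(lam-bet)).
  { rewrite <- E2 at 1. field. auto. }
  assert (E3' : lam*r = 2*lam^2*p*r + lam*r^2 + 2*q*r*(lam+bet-1)).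
  { rewrite <- E3 at 1. field. auto. }
  clear E2 E3.
  split. { assert (p*(p-1) = 0) by lra. apply Rmult_integral in H. lra. }
  split. { lra. }
  destruct (Req_dec q 0) as [Hq|Hq].
  - left. split; auto. subst q.
    assert (r*(lam*(r - (1-2*lam*p))) = 0) by nra.
    apply Rmult_integral in H. destruct H as [H|H]; [left; auto|].
    apply Rmult_integral in H. destruct H; [lra|right; lra].
  - destruct (Req_dec r 0) as [Hr|Hr].
    + right; left. split; auto. subst r.
      assert (q*(lam*(q - (1-2*lam*p))) = 0) by nra.
      apply Rmult_integral in H. destruct H as [H|H]; [lra|].
      apply Rmult_integral in H. destruct H; [lra|right; lra].
    + right; right. split; auto. split; auto.
      assert (L1 : q*(lam*q + 2*r*(lam-bet) - lam*(1-2*lam*p)) = 0) by nra.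
      assert (L2 : r*(lam*r + 2*q*(lam+bet-1) - lam*(1-2*lam*p)) = 0) by nra.
      apply Rmult_integral in L1. destruct L1 as [L1|L1]; [lra|].
      apply Rmult_integral in L2. destruct L2 as [L2|L2]; [lra|].
      split.
      * assert (Dval lam bet * q - lam*(1-2*lam*p)*(2*bet-lam) =
          lam*(lam*q + 2*r*(lam-bet) - lam*(1-2*lam*p)) -
          2*(lam-bet)*(lam*r + 2*q*(lam+bet-1) - lam*(1-2*lam*p))) by (unfold Dval; ring).
        rewrite L1, L2 in H. lra.
      * assert (Dval lam bet * r - lam*(1-2*lam*p)*(2-2*bet-lam) =
          lam*(lam*r + 2*q*(lam+bet-1) - lam*(1-2*lam*p)) -
          2*(lam+bet-1)*(lam*q + 2*r*(lam-bet) - lam*(1-2*lam*p))) by (unfold Dval; ring).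
        rewrite L1, L2 in H. lra.
Qed.

Lemma inP_D lam bet : 0 < lam < 1 -> 0 < bet < 1 -> (inP lam bet <-> Dval lam bet = 0).
Proof.
  intros Hl Hb. unfold inP, Dval. split.
  - intros [H1 H2].
    assert (Hs : sqrt ((1-lam)*(1-3*lam)) * sqrt ((1-lam)*(1-3*lam)) = (1-lam)*(1-3*lam)).
    { apply sqrt_sqrt. nra. }
    destruct H2 as [H2|H2]; rewrite H2; nra.
  - intro H. assert (Hsq : (2*bet-1)*(2*bet-1) = (1-lam)*(1-3*lam)) by nra.
    assert (H3 : 0 <= (1-lam)*(1-3*lam)) by (rewrite <- Hsq; apply Rle_0_sqr).
    split. { split; [lra|]. nra. }
    destruct (Rle_dec 0 (2*bet-1)) as [Hp|Hp].
    + left. rewrite <- Hsq. rewrite sqrt_square by auto. lra.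
    + right. replace ((2*bet-1)*(2*bet-1)) with ((1-2*bet)*(1-2*bet)) in Hsq by ring.
      rewrite <- Hsq. rewrite sqrt_square by lra. lra.
Qed.

Ltac vsolve := unfold vadd, vscale, e_o, e_a, e_b, e_c, vzero; simpl; f_equal; try lra.

Lemma nz_of (x : vec) : co x <> 0 \/ ca x <> 0 \/ cb x <> 0 -> x <> vzero.
Proof. intros H E; subst; simpl in H; lra. Qed.

Lemma idem_mk lam bet p q r s : lam <> 0 ->
  p*p = p -> 2*lam*p*q + q*q + 2*q*r*(lam-bet)/lam = q ->
   2*lam*p*r + r*r + 2*q*r*(lam+bet-1)/lam = r -> 2*q*r = s ->
  idempotent lam bet (mkV p q r s).
Proof. intros. apply idem_iff; auto. Qed.

Lemma list_idem lam bet x : 0 < lam < 1 ->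
  (x = e_o \/ x = e_a \/ x = e_b \/
        x = vadd e_o (vscale (1 - 2 * lam) e_a) \/
        x = vadd e_o (vscale (1 - 2 * lam) e_b)) -> idempotent lam bet x.
Proof.
  intros Hl H. assert (Hl0 : lam <> 0) by lra.
  destruct H as [H|[H|[H|[H|H]]]]; subst.
  - apply idem_mk; auto; field; auto.
  - apply idem_mk; auto; field; auto.
  - apply idem_mk; auto; field; auto.
  - unfold vadd, vscale, e_o, e_a; simpl. apply idem_mk; auto; field; auto.
  - unfold vadd, vscale, e_o, e_b; simpl. apply idem_mk; auto; field; auto.
Qed.

Lemma list_nz lam x : 0 < lam < 1 ->
  (x = e_o \/ x = e_a \/ x = e_b \/
        x = vadd e_o (vscale (1 - 2 * lam) e_a) \/
        x = vadd e_o (vscale (1 - 2 * lam) e_b)) -> x <> vzero.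
Proof.
  intros Hl H. apply nz_of.
  destruct H as [H|[H|[H|[H|H]]]]; subst; simpl; lra.
Qed.

Lemma j_idem lam bet eps : 0 < lam < 1 -> Dval lam bet <> 0 -> (eps = 0 \/ eps = 1) ->
  idempotent lam bet (jvec lam bet eps).
Proof.
  intros Hl HD He. assert (Hl0 : lam <> 0) by lra.
  unfold jvec, vadd, vscale, e_o, e_a, e_b, e_c; simpl.
  destruct He; subst; apply idem_mk; auto; unfold Dval in *; field; auto.
Qed.

Theorem mainTheorem2 (lam bet : R) (Hl : 0 < lam < 1) (Hb : 0 < bet < 1) :
  (inP lam bet ->
     forall x : vec, (x <> vzero /\ idempotent lam bet x) <->
       (x = e_o \/ x = e_a \/ x = e_b \/
        x = vadd e_o (vscale (1 - 2 * lam) e_a) \/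
        x = vadd e_o (vscale (1 - 2 * lam) e_b))) /\
  (~ inP lam bet ->
     forall x : vec, (x <> vzero /\ idempotent lam bet x) <->
       ((x = e_o \/ x = e_a \/ x = e_b \/
         x = vadd e_o (vscale (1 - 2 * lam) e_a) \/
         x = vadd e_o (vscale (1 - 2 * lam) e_b) \/
         x = jvec lam bet 0 \/ x = jvec lam bet 1) /\ x <> vzero)).
Proof.
  assert (Hl0 : lam <> 0) by lra.
  split.
  - intros HP x. assert (HD : Dval lam bet = 0) by (apply inP_D; auto).
    assert (Hl3 : lam <= 1/3) by (destruct HP as [[_ ?] _]; auto).
    split.
    + intros [Hnz Hi]. destruct x as [p q r s].
      destruct (classify lam bet p q r s Hl Hi) as [Hp [Hs C]].
      rewrite HD in C. subst s.
      destruct C as [[Hq [Hr|Hr]]|[[Hr [Hq|Hq]]|[_ [_ [C1 C2]]]]]; subst;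
        destruct Hp; subst.
      * exfalso; apply Hnz; vsolve.
      * left; vsolve.
      * right; right; left; vsolve.
      * right; right; right; right; vsolve.
      * exfalso; apply Hnz; vsolve.
      * left; vsolve.
      * right; left; vsolve.
      * right; right; right; left; vsolve.
      * exfalso. nra.
      * exfalso. nra.
    + intro H. split; [apply (list_nz lam); auto | apply list_idem; auto].
  - intros HP x. assert (HD : Dval lam bet <> 0) by (intro E; apply HP; apply inP_D; auto).
    split.
    + intros [Hnz Hi]. split; auto. destruct x as [p q r s].
      destruct (classify lam bet p q r s Hl Hi) as [Hp [Hs C]].
      subst s.
      destruct C as [[Hq [Hr|Hr]]|[[Hr [Hq|Hq]]|[_ [_ [C1 C2]]]]].
      * subst; destruct Hp; subst; [exfalso; apply Hnz; vsolve| left; vsolve].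
      * subst; destruct Hp; subst; [right; right; left; vsolve| right; right; right; right; left; vsolve].
      * subst; destruct Hp; subst; [exfalso; apply Hnz; vsolve| left; vsolve].
      * subst; destruct Hp; subst; [right; left; vsolve| right; right; right; left; vsolve].
      * assert (Eq : q = lam*(1-2*lam*p)*(2*bet-lam) / Dval lam bet) by
          (rewrite <- C1; field; auto).
        assert (Er : r = lam*(1-2*lam*p)*(2-2*bet-lam) / Dval lam bet) by
          (rewrite <- C2; field; auto).
        rewrite Eq, Er. clear C1 C2 Eq Er.
        right; right; right; right; right.
        destruct Hp; subst; [left|right];
          unfold jvec, vadd, vscale, e_o, e_a, e_b, e_c; simpl; f_equal; field; auto.
    + intros [H Hnz]. split; auto.
      destruct H as [H|[H|[H|[H|[H|[H|H]]]]]];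
        try (apply list_idem; auto; tauto); subst; apply j_idem; auto.
Qed.
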